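(* Let $\mathbb{L}$ be a complete, algebraically closed non-Archimedean field of characteristic $0$ and let $\phi$ be a rational map over $\mathbb{L}$ of degree $\geq 2$ having good reduction. Let $\vec v$ be a direction at the Gauss point $\zeta_{Gauss}$ which, viewed as a point of $\mathbb{P}^1(\tilde{\mathbb{L}})$, is a fixed critical point of the reduction $\tilde\phi$. Let $\xi$ be a fixed point of $\phi$ lying in the open Berkovich disk $B_{\vec v}$ (the component of $\mathbb{P}^1_{an}\setminus\{\zeta_{Gauss}\}$ corresponding to $\vec v$). Then $\xi$ is of type $1$, i.e. $\xi\in\mathbb{P}^1(\mathbb{L})$.
   Context: $\mathbb{P}^1_{an}$ is the Berkovich projective line over $\mathbb{L}$; $\zeta_{Gauss}$ is the type $2$ point corresponding to the closed unit disk $D(0,1)$. Directions at $\zeta_{Gauss}$ (connected components of $\mathbb{P}^1_{an}\setminus\{\zeta_{Gauss}\}$) are identified with $\mathbb{P}^1(\tilde{\mathbb{L}})$, $\tilde{\mathbb{L}}$ the residue field, the direction containing $a\in\mathbb{P}^1(\mathbb{L})$ corresponding to its reduction $\tilde a$. The reduction $\tilde\phi$ is obtained by reducing a normalized form of $\phi$ (coprime numerator/denominator, coefficients in the valuation ring, not all in the maximal ideal) modulo the maximal ideal and cancelling common factors; good reduction means $\deg\tilde\phi=\deg\phi$. A critical point of $\tilde\phi$ is a point where $\tilde\phi$ has multiplicity at least $2$. *)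

(* Defs.v *)
From HB Require Import structures.
From mathcomp Require Import all_boot all_order all_algebra.
From mathcomp Require Import reals.
From mathcomp.multinomials Require Export mpoly.

Set Implicit Arguments.
Unset Strict Implicit.
Unset Printing Implicit Defensive.

Import Order.TTheory GRing.Theory Num.Theory.
Local Open Scope ring_scope.

Section Berkovich.
Variables (R : realType) (L : fieldType) (abs : L -> R).

Definition nonarch_abs : Prop :=
  [/\ forall x, 0 <= abs x,
      forall x, abs x = 0 <-> x = 0,
      forall x y, abs (x * y) = abs x * abs y &
      forall x y, abs (x + y) <= Num.max (abs x) (abs y)].

Definition abs_complete : Prop :=
  forall u : nat -> L,
    (forall e : R, 0 < e -> exists N : nat, forall m n : nat,
        (N <= m)%N -> (N <= n)%N -> abs (u m - u n) < e) ->
    exists l : L, forall e : R, 0 < e -> exists N : nat, forall n : nat,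
        (N <= n)%N -> abs (u n - l) < e.

(** Homogeneous coordinates: L[X,Y] = {mpoly L[2]}. *)
Definition varX : {mpoly L[2]} := 'X_(@Ordinal 2 0 isT).
Definition varY : {mpoly L[2]} := 'X_(@Ordinal 2 1 isT).

Definition integral_mpoly (P : {mpoly L[2]}) : Prop :=
  forall m, abs P@_m <= 1.

(** P and Q have the same reduction modulo the maximal ideal {|c| < 1}. *)
Definition red_eq (P Q : {mpoly L[2]}) : Prop :=
  forall m, abs (P - Q)@_m < 1.

Definition rat_map_lift (d : nat) (F1 F2 : {mpoly L[2]}) : Prop :=
  [/\ F1 \is d.-homog, F2 \is d.-homog &
      forall D Q1 Q2 : {mpoly L[2]}, F1 = D * Q1 -> F2 = D * Q2 ->
        D = (D@_0%MM)%:MP].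

Definition normalized_lift (F1 F2 : {mpoly L[2]}) : Prop :=
  [/\ integral_mpoly F1, integral_mpoly F2 &
      exists m, abs F1@_m = 1 \/ abs F2@_m = 1].

(** Good reduction: the reductions of F1, F2 (polynomials over the residue
    field) have no nonconstant common factor, i.e. nothing cancels and the
    reduction has the same degree d.  Any factorisation over the residue
    field lifts to one with coefficients in O. *)
Definition good_reduction (F1 F2 : {mpoly L[2]}) : Prop :=
  forall D Q1 Q2 : {mpoly L[2]},
    integral_mpoly D -> integral_mpoly Q1 -> integral_mpoly Q2 ->
    red_eq F1 (D * Q1) -> red_eq F2 (D * Q2) ->
    forall m, m != 0%MM -> abs D@_m < 1.

(** (a : b) is a normalized lift of a point of P^1(residue field),
    i.e. of a direction at the Gauss point. *)
Definition direction_lift (a b : L) : Prop :=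
  abs a <= 1 /\ abs b <= 1 /\ Num.max (abs a) (abs b) = 1.

(** The reduction of phi = [F1 : F2] fixes the residue point (a~ : b~) with
    multiplicity >= 2: the linear form (b~ X - a~ Y) divides the fibre
    polynomial b~ F1~ - a~ F2~ to order at least 2 over the residue field. *)
Definition fixed_critical_red (F1 F2 : {mpoly L[2]}) (a b : L) : Prop :=
  exists Q : {mpoly L[2]}, integral_mpoly Q /\
    red_eq (b *: F1 - a *: F2) ((b *: varX - a *: varY) ^+ 2 * Q).

(** Berkovich projective line (Baker--Rumely, Sec. 2.2): multiplicative
    seminorms on L[X,Y] extending abs and not identically zero on (X,Y),
    up to the equivalence [G]_1 = C^deg G [G]_2 on homogeneous G. *)
Definition mult_seminorm (s : {mpoly L[2]} -> R) : Prop :=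
  [/\ forall f, 0 <= s f,
      forall f g, s (f * g) = s f * s g,
      forall f g, s (f + g) <= s f + s g &
      forall c, s c%:MP = abs c].

Definition berk_point (s : {mpoly L[2]} -> R) : Prop :=
  mult_seminorm s /\ exists f : {mpoly L[2]}, f@_0%MM = 0 /\ s f != 0.

Definition berk_equiv (s1 s2 : {mpoly L[2]} -> R) : Prop :=
  exists C : R, 0 < C /\
    forall (n : nat) (G : {mpoly L[2]}), G \is n.-homog -> s1 G = C ^+ n * s2 G.

Definition berk_push (F1 F2 : {mpoly L[2]}) (s : {mpoly L[2]} -> R) :
  {mpoly L[2]} -> R := fun G => s (G \mPo [tuple F1; F2]).

Definition berk_fixed (F1 F2 : {mpoly L[2]}) (s : {mpoly L[2]} -> R) : Prop :=
  berk_equiv (berk_push F1 F2 s) s.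

(** The open Berkovich disk B_v, v = (a~ : b~): the residue class at the
    Gauss point of the classical points reducing to (a~ : b~). *)
Definition in_direction (a b : L) (s : {mpoly L[2]} -> R) : Prop :=
  s (b *: varX - a *: varY) < Num.max (s varX) (s varY).

Definition eval_seminorm (x y : L) : {mpoly L[2]} -> R :=
  fun G => abs G.@[fun i : 'I_2 => if val i == 0%N then x else y].

Definition type1_point (s : {mpoly L[2]} -> R) : Prop :=
  exists x y : L, (x != 0 \/ y != 0) /\ berk_equiv s (eval_seminorm x y).

End Berkovich.

(* Main.v *)
Require Import Defs.
From HB Require Import structures.
From mathcomp Require Import all_boot all_order all_algebra.
From mathcomp Require Import reals.
From mathcomp Require Import ring lra.
From mathcomp.multinomials Require Import mpoly.
Import Order.TTheory GRing.Theory Num.Theory.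
Local Open Scope ring_scope.

Section Abs.
Context {R : realType} {L : fieldType} {abs : L -> R}.
Hypothesis Hab : nonarch_abs abs.

Lemma abs_ge0 x : 0 <= abs x. Proof. by case: Hab. Qed.
Lemma abs0 : abs 0 = 0. Proof. by case: Hab => _ h _ _; apply/(h 0).2. Qed.
Lemma absM x y : abs (x * y) = abs x * abs y. Proof. by case: Hab. Qed.
Lemma absD x y : abs (x + y) <= Num.max (abs x) (abs y). Proof. by case: Hab. Qed.
Lemma abs_eq0 x : abs x = 0 -> x = 0. Proof. by case: Hab => _ h _ _; apply/(h x).1. Qed.
Lemma abs1 : abs 1 = 1.
Proof.
have h := absM 1 1; rewrite mulr1 in h.
have nz : abs 1 != 0 by apply/eqP => /abs_eq0/eqP; rewrite oner_eq0.
by apply: (mulfI nz); rewrite mulr1 -h.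
Qed.
Lemma absN1 : abs (-1) = 1.
Proof.
have h := absM (-1) (-1); rewrite mulrNN mulr1 abs1 in h.
have h0 := abs_ge0 (-1).
nra.
Qed.
Lemma absN x : abs (- x) = abs x.
Proof. by rewrite -mulN1r absM absN1 mul1r. Qed.
Lemma absB x y : abs (x - y) <= Num.max (abs x) (abs y).
Proof. by rewrite -(absN y) absD. Qed.
Lemma abs_nat k : abs (k%:R) <= 1.
Proof.
elim: k => [|k IH]; first by rewrite abs0.
rewrite -addn1 natrD; apply: le_trans (absD _ _) _.
by rewrite ge_max IH abs1 lexx.
Qed.
Lemma abs_strict x y : abs x < abs y -> abs (x + y) = abs y.
Proof.
move=> h; apply/eqP; rewrite eq_le; apply/andP; split.
  by apply: le_trans (absD _ _) _; rewrite ge_max (ltW h) lexx.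
have e : y = (x + y) - x by rewrite addrC addKr.
have := absB (x + y) x; rewrite -e => h2.
move: h2; rewrite le_max => /orP[//|h2]; by rewrite leNgt h in h2.
Qed.
Lemma abs_sum_le (I : Type) (r : seq I) (P : pred I) (F : I -> L) (B : R) :
  0 <= B -> (forall i, P i -> abs (F i) <= B) -> abs (\sum_(i <- r | P i) F i) <= B.
Proof.
move=> B0 h; elim/big_ind: _ => //; first by rewrite abs0.
by move=> x y hx hy; apply: le_trans (absD _ _) _; rewrite ge_max hx hy.
Qed.
Lemma abs_prod (I : Type) (r : seq I) (F : I -> L) :
  abs (\prod_(i <- r) F i) = \prod_(i <- r) abs (F i).
Proof. by apply: (big_morph abs absM abs1). Qed.
Lemma abs_exp x k : abs (x ^+ k) = abs x ^+ k.
Proof. by elim: k => [|k IH]; rewrite ?expr0 ?abs1 // !exprS absM IH. Qed.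

End Abs.


Lemma bern2 (R : realType) (h : R) (N : nat) : 0 <= h ->
  2 + 2 * N%:R * h + N%:R * (N%:R - 1) * h ^+ 2 <= 2 * (1 + h) ^+ N.
Proof.
move=> h0; elim: N => [|N IH]; first by rewrite expr0; lra.
rewrite exprS -natr1.
have hN : 0 <= N%:R :> R by [].
have hNN : 0 <= N%:R * (N%:R - 1) :> R.
  clear IH hN; case: N => [|N]; first by rewrite mul0r.
  rewrite -natr1 addrK; have := ler0n R N; nra.
have h3 : 0 <= N%:R * (N%:R - 1) * h ^+ 3 by rewrite mulr_ge0 // exprn_ge0.
have hp : 0 <= (1 + h) ^+ N by rewrite exprn_ge0 // addr_ge0.
have := ler_wpM2r (addr_ge0 ler01 h0) IH.
rewrite !exprS expr0 in h3 *; nra.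
Qed.

Lemma le_of_pow (R : realType) (x M : R) : 0 <= x -> 0 <= M ->
  (forall N : nat, x ^+ N <= N.+1%:R * M ^+ N) -> x <= M.
Proof.
move=> x0 M0 h; rewrite leNgt; apply/negP => xM.
have [M00|Mpos] := eqVneq M 0.
  by have := h 1%N; rewrite !expr1 M00 mulr0 => hx; move: xM; rewrite M00; lra.
have Mp : 0 < M by rewrite lt_def Mpos M0.
set q := x / M.
have q1 : 1 < q by rewrite /q ltr_pdivlMr // mul1r.
set hh := q - 1.
have hpos : 0 < hh by rewrite /hh subr_gt0.
have hq : forall N : nat, q ^+ N <= N.+1%:R.
  move=> N; have := h N; rewrite /q expr_div_n ler_pdivrMr ?exprn_gt0 //.
set B := 2 / hh ^+ 2 + 1.
have B0 : 0 <= B by rewrite /B addr_ge0 // divr_ge0 // exprn_ge0 // ltW.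
have := archi_boundP B0; set N := Num.Def.archi_bound B => hN.
have e1q : 1 + hh = q by rewrite /hh; ring.
have := @bern2 R hh N (ltW hpos); rewrite e1q => hb.
have := hq N; rewrite -natr1 => hq'.
have e1 : 2 < (N%:R - 1) * hh ^+ 2.
  rewrite -ltr_pdivrMr ?exprn_gt0 //; move: hN; rewrite /B; lra.
have hN0 : 0 <= N%:R :> R by [].
have : 2 * N%:R < N%:R * (N%:R - 1) * hh ^+ 2 + 2 * N%:R * hh.
  have hN1 : 1 <= N%:R :> R.
    move: hN; rewrite /B => hN.
    have : 0 <= 2 / hh ^+ 2 by rewrite divr_ge0 // exprn_ge0 // ltW.
    lra.
  have : 2 * N%:R < N%:R * ((N%:R - 1) * hh ^+ 2) by nra.
  have : 0 <= 2 * N%:R * hh by rewrite mulr_ge0 // ?mulr_ge0 // ltW.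
  rewrite mulrA; lra.
lra.
Qed.


Section Semi.
Context {R : realType} {L : fieldType} {abs : L -> R}.
Hypothesis Hab : nonarch_abs abs.
Local Notation MP := {mpoly L[2]}.
Context {s : MP -> R}.
Hypothesis Hs : mult_seminorm abs s.

Lemma s_ge0 f : 0 <= s f. Proof. by case: Hs. Qed.
Lemma sM f g : s (f * g) = s f * s g. Proof. by case: Hs. Qed.
Lemma s_tri f g : s (f + g) <= s f + s g. Proof. by case: Hs. Qed.
Lemma sC c : s c%:MP = abs c. Proof. by case: Hs. Qed.
Lemma s0 : s 0 = 0. Proof. by rewrite -mpolyC0 sC abs0. Qed.
Lemma s1 : s 1 = 1. Proof. by rewrite -mpolyC1 sC abs1. Qed.
Lemma sZ c f : s (c *: f) = abs c * s f. Proof. by rewrite -mul_mpolyC sM sC. Qed.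
Lemma sN f : s (- f) = s f. Proof. by rewrite -scaleN1r sZ absN1 // mul1r. Qed.
Lemma s_exp f k : s (f ^+ k) = s f ^+ k.
Proof. by elim: k => [|k IH]; rewrite ?expr0 ?s1 // !exprS sM IH. Qed.
Lemma s_nat k : s (k%:R) <= 1.
Proof. by rewrite -mpolyC_nat sC abs_nat. Qed.
Lemma s_sum_tri (I : Type) (r : seq I) (P : pred I) (F : I -> MP) :
  s (\sum_(i <- r | P i) F i) <= \sum_(i <- r | P i) s (F i).
Proof.
apply: (big_ind2 (fun a b => s a <= b)) => //; first by rewrite s0.
by move=> x1 x2 y1 y2 h1 h2; apply: le_trans (s_tri _ _) _; apply: lerD.
Qed.

Lemma s_ultra f g : s (f + g) <= Num.max (s f) (s g).
Proof.
set M := Num.max (s f) (s g).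
have M0 : 0 <= M by rewrite le_max s_ge0.
apply: le_of_pow => //; first exact: s_ge0.
move=> N; rewrite -s_exp exprDn; apply: le_trans (s_sum_tri _ _ _ _) _.
have -> : N.+1%:R * M ^+ N = \sum_(i < N.+1) M ^+ N.
  by rewrite sumr_const card_ord mulr_natl.
apply: ler_sum => i _; rewrite -mulr_natr sM.
have h1 : s f <= M by rewrite le_max lexx.
have h2 : s g <= M by rewrite le_max lexx orbT.
rewrite -[M ^+ N]mulr1; apply: ler_pM; rewrite ?s_ge0 ?exprn_ge0 ?s_nat //.
have hi : (i <= N)%N by rewrite -ltnS.
have -> : M ^+ N = M ^+ (N - i) * M ^+ i by rewrite -exprD subnK.
rewrite sM !s_exp; apply: ler_pM; rewrite ?exprn_ge0 ?s_ge0 //; apply: lerXn2r;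
  rewrite ?nnegrE ?s_ge0 //.
Qed.

Lemma sB f g : s (f - g) <= Num.max (s f) (s g).
Proof. by rewrite -(sN g) s_ultra. Qed.

Lemma s_sum_le (I : Type) (r : seq I) (P : pred I) (F : I -> MP) (B : R) :
  0 <= B -> (forall i, P i -> s (F i) <= B) -> s (\sum_(i <- r | P i) F i) <= B.
Proof.
move=> B0 h; elim/big_ind: _ => //; first by rewrite s0.
by move=> x y hx hy; apply: le_trans (s_ultra _ _) _; rewrite ge_max hx hy.
Qed.

Lemma s_strict f g : s g < s f -> s (f + g) = s f.
Proof.
move=> h; apply/eqP; rewrite eq_le; apply/andP; split.
  by apply: le_trans (s_ultra _ _) _; rewrite ge_max (ltW h) lexx.
have e : f = (f + g) - g by rewrite addrK.
have := sB (f + g) g; rewrite -e le_max => /orP[//|h2].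
by rewrite leNgt h in h2.
Qed.

End Semi.


Lemma prod2 (T : comPzSemiRingType) (i j : 'I_2) (F : 'I_2 -> T) : i != j ->
  \prod_(k < 2) F k = F i * F j.
Proof.
rewrite !big_ord_recl big_ord0 mulr1.
case: i => [[|[|//]] hi]; case: j => [[|[|//]] hj] //= _.
  by congr (F _ * F _); apply: val_inj.
rewrite mulrC; by congr (F _ * F _); apply: val_inj.
Qed.

Lemma sum2 (i j : 'I_2) (F : 'I_2 -> nat) : i != j ->
  (\sum_(k < 2) F k = F i + F j)%N.
Proof.
rewrite !big_ord_recl big_ord0 addn0.
case: i => [[|[|//]] hi]; case: j => [[|[|//]] hj] //= _.
  by congr (F _ + F _)%N; apply: val_inj.
rewrite addnC; by congr (F _ + F _)%N; apply: val_inj.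
Qed.

Section Poly2.
Context {R : realType} {L : fieldType} {abs : L -> R}.
Hypothesis Hab : nonarch_abs abs.
Local Notation MP := {mpoly L[2]}.
Variables (i j : 'I_2).
Hypothesis hij : i != j.

Definition cb (g : R) (P : MP) := forall m, abs P@_m <= g.

Lemma monoE (m : 'X_{1..2}) : 'X_[m] = ('X_i : MP) ^+ m i * 'X_j ^+ m j.
Proof. by rewrite mpolyXE_id (@prod2 _ i j (fun k => ('X_k : MP) ^+ m k)). Qed.

Lemma mdeg2 (m : 'X_{1..2}) : mdeg m = (m i + m j)%N.
Proof. by rewrite mdegE (@sum2 i j (fun k => m k)). Qed.

Lemma meval2 (v : 'I_2 -> L) (P : MP) :
  P.@[v] = \sum_(m <- msupp P) P@_m * (v i ^+ m i * v j ^+ m j).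
Proof.
rewrite mevalE; apply: eq_bigr => m _.
by rewrite (@prod2 _ i j (fun k => v k ^+ m k)).
Qed.

Lemma cb_ge0 {g P} : cb g P -> 0 <= g.
Proof. by move=> h; exact: le_trans (abs_ge0 Hab _) (h 0%MM). Qed.

Lemma cb0 g : 0 <= g -> cb g 0.
Proof. by move=> g0 m; rewrite mcoeff0 abs0. Qed.

Lemma cbW {g g' P} : g <= g' -> cb g P -> cb g' P.
Proof. by move=> h hP m; apply: le_trans (hP m) h. Qed.

Lemma cbD {g P Q} : cb g P -> cb g Q -> cb g (P + Q).
Proof.
move=> hP hQ m; rewrite mcoeffD; apply: le_trans (absD Hab _ _) _.
by rewrite ge_max hP hQ.
Qed.

Lemma cbN {g P} : cb g P -> cb g (- P).
Proof. by move=> hP m; rewrite mcoeffN absN. Qed.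

Lemma cbB {g P Q} : cb g P -> cb g Q -> cb g (P - Q).
Proof. by move=> hP hQ; apply: cbD => //; apply: cbN. Qed.

Lemma cbZ {g} c {P} : cb g P -> cb (abs c * g) (c *: P).
Proof.
move=> hP m; rewrite mcoeffZ absM //; apply: ler_wpM2l; [exact: abs_ge0 | exact: hP].
Qed.

Lemma cbZ1 {g c P} : abs c <= 1 -> cb g P -> cb g (c *: P).
Proof.
move=> hc hP; have g0 := cb_ge0 hP.
by apply: cbW (cbZ c hP); rewrite -[X in _ <= X]mul1r ler_wpM2r.
Qed.

Lemma cb_sum (I : Type) (r : seq I) (P : pred I) (F : I -> MP) g :
  0 <= g -> (forall k, P k -> cb g (F k)) -> cb g (\sum_(k <- r | P k) F k).
Proof.
move=> g0 h; elim/big_ind: _ => //; first exact: cb0.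
by move=> x y; apply: cbD.
Qed.

Lemma cbM {g1 g2 P Q} : cb g1 P -> cb g2 Q -> cb (g1 * g2) (P * Q).
Proof.
move=> hP hQ m; rewrite mcoeffM; apply: abs_sum_le => //.
  by apply: mulr_ge0; [apply: cb_ge0 hP | apply: cb_ge0 hQ].
move=> k _; rewrite absM //; apply: ler_pM => //; exact: abs_ge0.
Qed.

Lemma cbXm m : cb 1 ('X_[m] : MP).
Proof. by move=> k; rewrite mcoeffX abs_nat. Qed.

Lemma cbX k : cb 1 ('X_k : MP).
Proof. exact: cbXm. Qed.

Lemma cb1 : cb 1 (1 : MP).
Proof. by rewrite -mpolyX0; apply: cbXm. Qed.

Lemma cbXn {P} k : cb 1 P -> cb 1 (P ^+ k).
Proof.
move=> hP; elim: k => [|k IH]; first by rewrite expr0; apply: cb1.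
by rewrite exprS -[1 : R]mulr1; apply: cbM.
Qed.

Lemma cbM1 {g P Q} : cb 1 P -> cb g Q -> cb g (P * Q).
Proof. by move=> hP hQ; rewrite -[g]mul1r; apply: cbM. Qed.

Definition pt (c : L) : 'I_2 -> L := fun k => if k == i then c else 1.

Definition Dv (c : L) (P : MP) : MP :=
  \sum_(m <- msupp P) P@_m *:
     ((\sum_(k < m i) ('X_i : MP) ^+ ((m i).-1 - k) * (c *: 'X_j) ^+ k) * 'X_j ^+ m j).

Lemma ptj c : pt c j = 1.
Proof. by rewrite /pt eq_sym (negbTE hij). Qed.
Lemma pti c : pt c i = c.
Proof. by rewrite /pt eqxx. Qed.

Lemma Dv_decomp (c : L) (P : MP) (n : nat) : P \is n.-homog ->
  P = ('X_i - c *: 'X_j) * Dv c P + P.@[pt c] *: 'X_j ^+ n.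
Proof.
move=> hP; rewrite {1}[P]mpolyE meval2 /Dv mulr_sumr scaler_suml -big_split /=.
rewrite !big_seq; apply: eq_bigr => m hm.
rewrite monoE pti ptj expr1n mulr1.
have -> : ('X_i : MP) ^+ m i = ('X_i - c *: 'X_j) *
   (\sum_(k < m i) 'X_i ^+ ((m i).-1 - k) * (c *: 'X_j) ^+ k) + (c *: 'X_j) ^+ m i.
  by rewrite -subrXX subrK.
rewrite mulrDl -scalerAr -mulrA scalerDr; congr (_ + _).
rewrite exprZn -scalerAl -exprD scalerA.
by rewrite -mdeg2 (dhomog_mf hP hm).
Qed.


Lemma cb_Dv g c P : abs c <= 1 -> cb g P -> cb g (Dv c P).
Proof.
move=> hc hP; have g0 := cb_ge0 hP.
apply: cb_sum => // m _.
set B := (X in P@_m *: X).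
have hB : cb 1 B.
  apply: cbM1; last by apply: cbXn; apply: cbX.
  apply: cb_sum => //= k _; apply: cbM1; first by apply: cbXn; apply: cbX.
  by apply: cbXn; apply: cbZ1 => //; apply: cbX.
by apply: (cbW _ (cbZ (P@_m) hB)); rewrite mulr1; exact: hP.
Qed.

Section SB.
Context {s : MP -> R}.
Hypothesis Hs : mult_seminorm abs s.
Variable S : R.
Hypotheses (hS0 : 0 <= S) (hSi : s 'X_i <= S) (hSj : s 'X_j <= S).

Lemma sXn k l : s ('X_k ^+ l) <= S ^+ l -> True. Proof. by []. Qed.

Lemma s_powi l : s ('X_i ^+ l) <= S ^+ l.
Proof. by rewrite (s_exp Hab Hs); apply: lerXn2r; rewrite ?nnegrE ?(s_ge0 Hs). Qed.
Lemma s_powj l : s ('X_j ^+ l) <= S ^+ l.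
Proof. by rewrite (s_exp Hab Hs); apply: lerXn2r; rewrite ?nnegrE ?(s_ge0 Hs). Qed.

Lemma s_mono m : s 'X_[m] <= S ^+ mdeg m.
Proof.
rewrite monoE (sM Hs) mdeg2 exprD; apply: ler_pM; rewrite ?(s_ge0 Hs) ?s_powi ?s_powj //.
Qed.

Lemma s_homog g P n : cb g P -> P \is n.-homog -> s P <= g * S ^+ n.
Proof.
move=> hP hh; have g0 := cb_ge0 hP.
rewrite {1}[P]mpolyE big_seq; apply: (s_sum_le Hab Hs); first by rewrite mulr_ge0 ?exprn_ge0.
move=> m hm; rewrite (sZ Hs); apply: ler_pM; rewrite ?abs_ge0 ?(s_ge0 Hs) //.
by rewrite -(dhomog_mf hh hm) s_mono.
Qed.

Lemma s_Dv g c P n : abs c <= 1 -> cb g P -> P \is n.-homog ->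
  s (Dv c P) <= g * S ^+ n.-1.
Proof.
move=> hc hP hh; have g0 := cb_ge0 hP.
rewrite /Dv big_seq; apply: (s_sum_le Hab Hs); first by rewrite mulr_ge0 ?exprn_ge0.
move=> m hm; rewrite (sZ Hs); apply: ler_pM; rewrite ?abs_ge0 ?(s_ge0 Hs) //.
have hn : (m i + m j)%N = n by rewrite -mdeg2; exact: (dhomog_mf hh hm).
rewrite (sM Hs); case hmi: (m i) => [|a].
  by rewrite big_ord0 (s0 Hab Hs) mul0r exprn_ge0.
have -> : n.-1 = (a + m j)%N by rewrite -hn hmi.
rewrite exprD; apply: ler_pM; rewrite ?(s_ge0 Hs) ?s_powj //.
apply: (s_sum_le Hab Hs); first by rewrite exprn_ge0.
move=> k _; rewrite (sM Hs) !(s_exp Hab Hs) (sZ Hs) /=.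
have hk : (k <= a)%N by rewrite -ltnS; exact: ltn_ord k.
have e : S ^+ a = S ^+ (a - k) * S ^+ k by rewrite -exprD subnK.
rewrite e; apply: ler_pM; rewrite ?exprn_ge0 ?mulr_ge0 ?abs_ge0 ?(s_ge0 Hs) //.
  by apply: lerXn2r; rewrite ?nnegrE ?(s_ge0 Hs).
apply: lerXn2r; rewrite ?nnegrE ?mulr_ge0 ?abs_ge0 ?(s_ge0 Hs) //.
rewrite -[S]mul1r; apply: ler_pM; rewrite ?abs_ge0 ?(s_ge0 Hs) //.
Qed.

End SB.

End Poly2.

Section EvSn.
Context {R : realType} {L : fieldType} {abs : L -> R}.
Hypothesis Hab : nonarch_abs abs.
Definition evsn (v : 'I_2 -> L) (P : {mpoly L[2]}) : R := abs P.@[v].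
Lemma evsn_ms v : mult_seminorm abs (evsn v).
Proof.
split => [f|f g|f g|c]; rewrite /evsn ?abs_ge0 // ?mevalM ?absM // ?mevalC //.
rewrite mevalD; apply: le_trans (absD Hab _ _) _.
by rewrite ge_max !lerDl ?lerDr ?abs_ge0.
Qed.
End EvSn.


Section Core.
Context {R : realType} {L : closedFieldType} {abs : L -> R}.
Hypothesis Hab : nonarch_abs abs.
Local Notation MP := {mpoly L[2]}.
Local Notation cb := (@cb R L abs).
Variables (i j : 'I_2).
Hypothesis hij : i != j.
Variables (d : nat) (Fi Fj : MP).
Hypotheses (hd : (2 <= d)%N) (hFi : Fi \is d.-homog) (hFj : Fj \is d.-homog)
  (cFi : cb 1 Fi) (cFj : cb 1 Fj).
Hypothesis GR : forall D Qi Qj : MP, cb 1 D -> cb 1 Qi -> cb 1 Qj ->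
  (forall m, abs (Fi - D * Qi)@_m < 1) -> (forall m, abs (Fj - D * Qj)@_m < 1) ->
  forall m, m != 0%MM -> abs D@_m < 1.
Variable c0 : L.
Hypothesis hc0 : abs c0 <= 1.
Variables (Q0 E0 : MP) (e : L).
Hypotheses (hQ0 : cb 1 Q0) (hQ0h : Q0 \is (d - 2).-homog) (he : abs e < 1)
  (hE0 : cb (abs e) E0).
Local Notation lam c := ('X_i - c *: 'X_j : MP).
Hypothesis hdec : Fi - c0 *: Fj = (lam c0) ^+ 2 * Q0 + E0.
Variable s : MP -> R.
Hypothesis Hs : mult_seminorm abs s.
Hypothesis hdir : s (lam c0) < Num.max (s 'X_i) (s 'X_j).
Variable C : R.
Hypothesis hCj : s Fj = C * s 'X_j.
Hypothesis hCl : forall c, s (Fi - c *: Fj) = C * s (lam c).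

Local Notation S := (s 'X_j).
Local Notation pt := (pt i).

Lemma hX1 k : ('X_k : MP) \is 1.-homog.
Proof. by rewrite dhomogX /= mdeg1. Qed.

Lemma lam_homog c : lam c \is 1.-homog.
Proof. by rewrite rpredB ?rpredZ ?hX1. Qed.

Lemma cb_lam {c} : abs c <= 1 -> cb 1 (lam c).
Proof. by move=> hc; apply: cbB => //; [apply: cbX | apply: cbZ1 => //; apply: cbX]. Qed.

Lemma lam_coef c : (lam c)@_(U_(i)%MM) = 1.
Proof. by rewrite mcoeffB mcoeffZ !mcoeffXU eqxx eq_sym (negbTE hij) mulr0 subr0. Qed.

Lemma lam_neq0 c : lam c != 0.
Proof. by apply/eqP => h; have := lam_coef c; rewrite h mcoeff0 => /eqP; rewrite eq_sym oner_eq0. Qed.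

Lemma Ui_neq0 : U_(i)%MM != 0%MM.
Proof. by rewrite -mdeg_eq0 mdeg1. Qed.

Lemma ev_lam c z : (lam c).@[pt z] = z - c.
Proof. by rewrite mevalB mevalZ !mevalXU pti ptj // mulr1. Qed.

Lemma E0_homog : E0 \is d.-homog.
Proof.
have -> : E0 = Fi - c0 *: Fj - lam c0 ^+ 2 * Q0 by rewrite hdec addrC addKr.
rewrite rpredB // ?rpredB ?rpredZ //.
have := dhomogM (dhomogMn 2 (lam_homog c0)) hQ0h.
by rewrite mul1n subnKC.
Qed.

Lemma sXi_le : s 'X_i <= S.
Proof.
rewrite leNgt; apply/negP => hlt.
move: hdir; rewrite (_ : Num.max _ _ = s 'X_i); last by rewrite max_l // ltW.
move=> hd'.
have e1 : ('X_i : MP) = lam c0 + c0 *: 'X_j by rewrite subrK.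
have := s_ultra Hab Hs (lam c0) (c0 *: 'X_j); rewrite -e1 (sZ Hs) le_max => /orP[].
- by rewrite leNgt hd'.
- move=> h; have : abs c0 * S <= S by rewrite -[X in _ <= X]mul1r ler_wpM2r ?(s_ge0 Hs).
  by move=> h2; move: (le_trans h h2); rewrite leNgt hlt.
Qed.

Lemma hdir' : s (lam c0) < S.
Proof. by move: hdir; rewrite max_r ?sXi_le. Qed.

Lemma S_gt0 : 0 < S.
Proof. exact: le_lt_trans (s_ge0 Hs _) hdir'. Qed.


Lemma ev_le {z g P n} : abs z <= 1 -> cb g P -> P \is n.-homog -> abs P.@[pt z] <= g.
Proof.
move=> hz hP hh.
have := s_homog Hab i j hij (evsn_ms Hab (pt z)) 1 ler01 _ _ g P n hP hh.
rewrite expr1n mulr1; apply.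
- by rewrite /evsn mevalXU pti.
- by rewrite /evsn mevalXU (ptj i j hij) (abs1 Hab).
Qed.

Lemma ev_Dv_le {z g c P n} : abs z <= 1 -> abs c <= 1 -> cb g P -> P \is n.-homog ->
  abs (Dv i j c P).@[pt z] <= g.
Proof.
move=> hz hc hP hh.
have := s_Dv Hab i j hij (evsn_ms Hab (pt z)) 1 ler01 _ _ g c P n hc hP hh.
rewrite expr1n mulr1; apply.
- by rewrite /evsn mevalXU pti.
- by rewrite /evsn mevalXU (ptj i j hij) (abs1 Hab).
Qed.

Lemma small_rest a n m : abs a < 1 -> abs (a *: ('X_j : MP) ^+ n)@_m < 1.
Proof.
move=> ha; rewrite mcoeffZ (absM Hab).
have h1 : abs (('X_j : MP) ^+ n)@_m <= 1 by apply: (cbXn Hab) ; apply: cbX.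
apply: le_lt_trans ha; rewrite -[X in _ <= X]mulr1; apply: ler_wpM2l => //; exact: abs_ge0.
Qed.

Lemma hdec_ev z : Fi.@[pt z] - c0 * Fj.@[pt z] = (z - c0) ^+ 2 * Q0.@[pt z] + E0.@[pt z].
Proof.
have := congr1 (meval (pt z)) hdec.
by rewrite mevalB mevalZ mevalD mevalM rmorphXn /= ev_lam.
Qed.

Lemma Fj_unit : abs Fj.@[pt c0] = 1.
Proof.
have hle : abs Fj.@[pt c0] <= 1 by apply: ev_le hc0 cFj hFj.
apply/eqP; rewrite eq_le hle /= leNgt; apply/negP => hlt.
have hFi0 : abs Fi.@[pt c0] < 1.
  have := hdec_ev c0; rewrite subrr expr0n /= mul0r add0r => h.
  have -> : Fi.@[pt c0] = c0 * Fj.@[pt c0] + E0.@[pt c0] by rewrite -h addrC subrK.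
  apply: le_lt_trans (absD Hab _ _) _; rewrite gt_max; apply/andP; split.
    by rewrite (absM Hab); apply: le_lt_trans hlt; rewrite -[X in _ <= X]mul1r ler_wpM2r ?abs_ge0.
  by apply: le_lt_trans he; apply: ev_le hc0 hE0 E0_homog.
have H1 : forall m, abs (Fi - lam c0 * Dv i j c0 Fi)@_m < 1.
  move=> m; rewrite {1}(Dv_decomp i j hij c0 _ _ hFi) addrC addKr; exact: small_rest.
have H2 : forall m, abs (Fj - lam c0 * Dv i j c0 Fj)@_m < 1.
  move=> m; rewrite {1}(Dv_decomp i j hij c0 _ _ hFj) addrC addKr; exact: small_rest.
have := GR _ _ _ (cb_lam hc0) (cb_Dv Hab i j _ _ _ hc0 cFi) (cb_Dv Hab i j _ _ _ hc0 cFj) H1 H2 _ Ui_neq0.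
by rewrite lam_coef (abs1 Hab) ltxx.
Qed.


Definition upoly (P : MP) : {poly L} := \sum_(m <- msupp P) P@_m *: 'X^(m i).

Lemma upolyE P z : (upoly P).[z] = P.@[pt z].
Proof.
rewrite /upoly horner_sum (meval2 i j hij); apply: eq_bigr => m _.
by rewrite hornerZ hornerXn pti (ptj i j hij) expr1n mulr1.
Qed.

Lemma ev_sc a n z : (a *: ('X_j : MP) ^+ n).@[pt z] = a.
Proof. by rewrite mevalZ rmorphXn /= mevalXU (ptj i j hij) expr1n mulr1. Qed.

Lemma root_exists : exists c, abs (c - c0) < 1 /\ Fi.@[pt c] - c * Fj.@[pt c] = 0.
Proof.
set p := upoly Fi - 'X * upoly Fj.
have pE z : p.[z] = Fi.@[pt z] - z * Fj.@[pt z] by rewrite /p !hornerE !upolyE.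
have [p0|p0] := eqVneq p.[c0] 0.
  by exists c0; rewrite subrr abs0 // ltr01 -pE.
have hpc0 : p.[c0] = E0.@[pt c0].
  by rewrite pE hdec_ev subrr expr0n /= mul0r add0r.
have hE0c : abs E0.@[pt c0] <= abs e by apply: ev_le hc0 hE0 E0_homog.
have e0 : e != 0.
  apply/eqP => e0; move: hE0c; rewrite e0 abs0 // => h.
  have h2 := abs_ge0 Hab E0.@[pt c0].
  have : abs E0.@[pt c0] = 0 by apply/eqP; rewrite eq_le h h2.
  by move/(abs_eq0 Hab) => h3; move: p0; rewrite hpc0 h3 eqxx.
have [w hw] := @solve_monicpoly L 2 (nth 0 [:: e]) isT.
rewrite !big_ord_recl big_ord0 /= mulr1 mul0r !addr0 in hw.
have habsw : abs w ^+ 2 = abs e by rewrite -(abs_exp Hab) hw.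
have w0 : 0 < abs w.
  rewrite lt_def abs_ge0 // andbT; apply/eqP => h; move: habsw; rewrite h expr0n /= => h'.
  by move: e0; rewrite (abs_eq0 Hab e (esym h')) eqxx.
have w1 : abs w < 1.
  rewrite ltNge; apply/negP => h; have : 1 <= abs w ^+ 2 by rewrite expr_ge1 // abs_ge0.
  by rewrite habsw leNgt he.
have ew : abs e < abs w.
  by rewrite -habsw expr2 -[X in _ < X]mulr1 ltr_pM2l.
set z := c0 + w.
have zc : z - c0 = w by rewrite /z addrAC subrr add0r.
have hz : abs z <= 1 by apply: le_trans (absD Hab _ _) _; rewrite ge_max hc0 ltW.
have hFjz : abs Fj.@[pt z] = 1.
  rewrite {1}(Dv_decomp i j hij c0 _ _ hFj) mevalD mevalM ev_lam ev_sc zc.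
  rewrite (abs_strict Hab) ?Fj_unit //.
  rewrite (absM Hab); apply: le_lt_trans w1.
  rewrite -[X in _ <= X]mulr1; apply: ler_wpM2l; first exact: abs_ge0.
  exact: ev_Dv_le hz hc0 cFj hFj.
have hpz : abs p.[z] = abs w.
  have -> : p.[z] = (w ^+ 2 * Q0.@[pt z] + E0.@[pt z]) + (- (w * Fj.@[pt z])).
    rewrite -zc -hdec_ev pE /z; ring.
  rewrite (abs_strict Hab) (absN Hab) (absM Hab) hFjz mulr1 //.
  apply: le_lt_trans (absD Hab _ _) _; rewrite gt_max; apply/andP; split.
    rewrite (absM Hab) (abs_exp Hab) habsw; apply: le_lt_trans ew.
    rewrite -[X in _ <= X]mulr1; apply: ler_wpM2l; first exact: abs_ge0.
    exact: ev_le hz hQ0 hQ0h.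
  by apply: le_lt_trans ew; apply: ev_le hz hE0 E0_homog.
have [rs hrs] := closed_field_poly_normal p.
have hev x : p.[x] = lead_coef p * \prod_(r <- rs) (x - r).
  by rewrite {1}hrs hornerZ horner_prod; congr (_ * _); apply: eq_bigr => r _; rewrite hornerXsubC.
case: (boolP (has (fun r => abs (r - c0) < 1) rs)).
  move/hasP => [r hr hlt]; exists r; split => //.
  by rewrite -pE hev (big_rem r hr) /= subrr mul0r mulr0.
move/hasPn => hfar.
have : abs p.[z] = abs p.[c0].
  rewrite !hev !(absM Hab) !(abs_prod Hab); congr (_ * _).
  rewrite !big_seq; apply: eq_bigr => r hr.
  have := hfar r hr; rewrite /= -leNgt => h1.
  have -> : z - r = w + (c0 - r) by rewrite /z; ring.
  rewrite (abs_strict Hab) // -opprB (absN Hab).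
  by apply: lt_le_trans h1.
rewrite hpz hpc0 => h; move: hE0c; rewrite -h leNgt ew //.
Qed.


Lemma s_zero_add f g : s f = 0 -> s (f + g) = s g.
Proof.
move=> h; apply/eqP; rewrite eq_le; apply/andP; split.
  by apply: le_trans (s_ultra Hab Hs _ _) _; rewrite h ge_max (s_ge0 Hs) lexx.
have e1 : g = (f + g) - f by rewrite addrC addKr.
by rewrite {1}e1; apply: le_trans (sB Hab Hs _ _) _; rewrite h ge_max lexx (s_ge0 Hs).
Qed.

Let hS0 : 0 <= S. Proof. exact: (s_ge0 Hs). Qed.

Lemma sDv {c g P n} : abs c <= 1 -> cb g P -> P \is n.-homog -> s (Dv i j c P) <= g * S ^+ n.-1.
Proof. by move=> hc hP hh; apply: (s_Dv Hab i j hij Hs S hS0 sXi_le (lexx _) g c P n hc hP hh). Qed.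

Lemma sH {g P n} : cb g P -> P \is n.-homog -> s P <= g * S ^+ n.
Proof. by move=> hP hh; apply: (s_homog Hab i j hij Hs S hS0 sXi_le (lexx _) g P n hP hh). Qed.

Lemma dS : d = (d - 2).+2.
Proof. by rewrite -addn2 subnK. Qed.

Lemma eSd : S ^+ d = S * S ^+ d.-1.
Proof. by rewrite -exprS prednK // ltnW. Qed.

Lemma eSd1 : S ^+ d.-1 = S * S ^+ (d - 2).
Proof. by rewrite -exprS {1}dS. Qed.

Lemma C_eq : C = S ^+ d.-1.
Proof.
have Sp := S_gt0.
have hSd : s Fj = S ^+ d.
  rewrite {1}(Dv_decomp i j hij c0 _ _ hFj) addrC (s_strict Hab Hs).
    by rewrite (sZ Hs) Fj_unit mul1r (s_exp Hab Hs).
  rewrite (sZ Hs) Fj_unit mul1r (s_exp Hab Hs) (sM Hs).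
  have h1 := sDv hc0 cFj hFj; rewrite mul1r in h1.
  apply: le_lt_trans (ler_wpM2l (s_ge0 Hs _) h1) _.
  by rewrite eSd ltr_pM2r ?hdir' // exprn_gt0.
move: hCj; rewrite hSd eSd mulrC => h.
by apply: (mulIf (lt0r_neq0 Sp)); rewrite -h.
Qed.

Lemma key : exists c, s (lam c) = 0.
Proof.
have Sp := S_gt0.
have [c [hcc hroot]] := root_exists.
set dl := c - c0.
have hc : abs c <= 1.
  have -> : c = c0 + dl by rewrite /dl addrC subrK.
  by apply: le_trans (absD Hab _ _) _; rewrite ge_max hc0 ltW.
set P := Fi - c *: Fj.
have hPh : P \is d.-homog by rewrite rpredB ?rpredZ.
have hPc : P.@[pt c] = 0 by rewrite mevalB mevalZ.
have hP : P = lam c * Dv i j c P.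
  by rewrite {1}(Dv_decomp i j hij c _ _ hPh) hPc scale0r addr0.
set T := P - lam c ^+ 2 * Q0.
have hFi' : Fi = c0 *: Fj + lam c0 ^+ 2 * Q0 + E0 by rewrite -addrA -hdec addrC subrK.
have hT : T = E0 + dl *: ('X_j * (lam c0 + lam c) * Q0 - Fj).
  rewrite /T /P hFi' /dl -!mul_mpolyC !mpolyCB; ring.
set g := Num.max (abs e) (abs dl).
have g1 : g < 1 by rewrite gt_max he hcc.
have cbT : cb g T.
  rewrite hT; apply: cbD => //.
    by apply: (cbW _ hE0); rewrite le_max lexx.
  have hin : cb 1 ('X_j * (lam c0 + lam c) * Q0 - Fj).
    apply: cbB => //; apply: cbM1 => //; apply: cbM1 => //; first exact: (cbX Hab).
    by apply: cbD => //; apply: cb_lam.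
  by apply: (cbW _ (cbZ Hab dl hin)); rewrite mulr1 le_max lexx orbT.
have hQ2 : lam c ^+ 2 * Q0 \is d.-homog.
  by have := dhomogM (dhomogMn 2 (lam_homog c)) hQ0h; rewrite mul1n subnKC.
have hTh : T \is d.-homog by rewrite rpredB.
have hTc : T.@[pt c] = 0.
  by rewrite mevalB hPc mevalM rmorphXn /= ev_lam subrr expr0n /= mul0r subrr.
have hT2 : T = lam c * Dv i j c T.
  by rewrite {1}(Dv_decomp i j hij c _ _ hTh) hTc scale0r addr0.
have hK : Dv i j c P = lam c * Q0 + Dv i j c T.
  apply: (mulfI (lam_neq0 c)); rewrite -hP mulrDr -hT2 mulrA -expr2 /T.
  by rewrite addrC subrK.
have hsl : s (lam c) < S.
  have -> : lam c = lam c0 - dl *: 'X_j by rewrite /dl scalerBl opprB addrA subrK. 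
  apply: le_lt_trans (sB Hab Hs _ _) _; rewrite gt_max hdir' (sZ Hs) /=.
  by rewrite -[X in _ < X]mul1r ltr_pM2r.
have hsK : s (Dv i j c P) < S ^+ d.-1.
  rewrite hK; apply: le_lt_trans (s_ultra Hab Hs _ _) _; rewrite gt_max; apply/andP; split.
    rewrite (sM Hs); have h1 := sH hQ0 hQ0h; rewrite mul1r in h1.
    apply: le_lt_trans (ler_wpM2l (s_ge0 Hs _) h1) _.
    by rewrite eSd1 ltr_pM2r // exprn_gt0.
  apply: le_lt_trans (sDv hc cbT hTh) _.
  by rewrite -[X in _ < X]mul1r ltr_pM2r ?exprn_gt0.
exists c; apply/eqP; apply: contraT => hne.
have := hCl c; rewrite -/P {1}hP (sM Hs) C_eq mulrC => h.
have := mulIf hne h => h2; move: hsK; rewrite h2 ltxx //.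
Qed.

Lemma core_result : exists c, forall n G, G \is n.-homog ->
  s G = S ^+ n * abs G.@[pt c].
Proof.
have [c hc] := key; exists c => n G hG.
rewrite {1}(Dv_decomp i j hij c _ _ hG) s_zero_add; last by rewrite (sM Hs) hc mul0r.
by rewrite (sZ Hs) (s_exp Hab Hs) mulrC.
Qed.

End Core.


Section Chart.
Context {R : realType} {L : closedFieldType} {abs : L -> R}.
Hypothesis Hab : nonarch_abs abs.
Local Notation MP := {mpoly L[2]}.
Local Notation cb := (@cb R L abs).

Lemma pihomogHM k n (H P : MP) : H \is k.-homog ->
  pihomog mdeg (k + n) (H * P) = H * pihomog mdeg n P.
Proof.
move=> hH; rewrite {1 2}[P]mpolyE mulr_sumr !raddf_sum /= mulr_sumr.
apply: eq_bigr => m _; rewrite -scalerAr !linearZ /= pihomogX -scalerAr; congr (_ *: _).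
have hm : H * 'X_[m] \is (k + mdeg m).-homog by apply: dhomogM => //; rewrite dhomogX.
case: eqP => [<-|hne]; first by rewrite pihomog_dE.
rewrite mulr0; apply: (pihomog_ne0 _ hm).
by rewrite eqn_add2l; apply/eqP.
Qed.

Lemma cb_pihomog g k P : cb g P -> cb g (pihomog mdeg k P).
Proof.
move=> hP; have g0 := cb_ge0 Hab hP.
rewrite pihomogE; apply: (cb_sum Hab) => // m _.
by apply: (cbW _ (cbZ Hab (P@_m) (cbXm Hab m))); rewrite mulr1.
Qed.

Lemma small_max (P : MP) : (forall m, abs P@_m < 1) ->
  exists e, abs e < 1 /\ cb (abs e) P.
Proof.
move=> hP.
suff [e [he hl]] : exists e, abs e < 1 /\ forall m, m \in msupp P -> abs P@_m <= abs e.
  exists e; split => // m; case: (boolP (m \in msupp P)) => hm; first exact: hl.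
  by rewrite memN_msupp_eq0 // (abs0 Hab) abs_ge0.
elim: (msupp P) => [|x l [e [he hl]]]; first by exists 0; rewrite (abs0 Hab) ltr01.
case: (lerP (abs P@_x) (abs e)) => hx.
  by exists e; split => // m; rewrite inE => /orP[/eqP ->|]; [exact: hx | exact: hl].
exists P@_x; split => // m; rewrite inE => /orP[/eqP ->|hm]; first exact: lexx.
by apply: le_trans (hl m hm) (ltW hx).
Qed.

Lemma abs_unit_inv u : abs u = 1 -> abs u^-1 = 1.
Proof.
move=> hu; have u0 : u != 0 by apply/eqP => h; move: hu; rewrite h (abs0 Hab) => /eqP; rewrite eq_sym oner_eq0.
have := absM Hab u u^-1; rewrite mulfV // (abs1 Hab) hu mul1r => h; by rewrite -h.
Qed.

Variables (i j : 'I_2).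
Hypothesis hij : i != j.
Variables (d : nat) (Fi Fj : MP).
Hypotheses (hd : (2 <= d)%N) (hFi : Fi \is d.-homog) (hFj : Fj \is d.-homog)
  (cFi : cb 1 Fi) (cFj : cb 1 Fj).
Hypothesis GR : forall D Qi Qj : MP, cb 1 D -> cb 1 Qi -> cb 1 Qj ->
  (forall m, abs (Fi - D * Qi)@_m < 1) -> (forall m, abs (Fj - D * Qj)@_m < 1) ->
  forall m, m != 0%MM -> abs D@_m < 1.
Variables (c0 u : L).
Hypotheses (hc0 : abs c0 <= 1) (hu : abs u = 1).
Local Notation lam c := ('X_i - c *: 'X_j : MP).
Variable Q : MP.
Hypothesis hQ : cb 1 Q.
Hypothesis hred : forall m, abs (u *: (Fi - c0 *: Fj) - (u *: lam c0) ^+ 2 * Q)@_m < 1.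
Variable s : MP -> R.
Hypothesis Hs : mult_seminorm abs s.
Hypothesis hdir : s (lam c0) < Num.max (s 'X_i) (s 'X_j).
Variable C : R.
Hypothesis hCj : s Fj = C * s 'X_j.
Hypothesis hCl : forall c, s (Fi - c *: Fj) = C * s (lam c).

Lemma chart_result : 0 < s 'X_j /\ exists c, forall n G, G \is n.-homog ->
  s G = s 'X_j ^+ n * abs G.@[pt i c].
Proof.
split; first exact: (S_gt0 Hab i j c0 hc0 s Hs hdir).
have u0 : u != 0 by apply/eqP => h; move: hu; rewrite h (abs0 Hab) => /eqP; rewrite eq_sym oner_eq0.
set Q1 := u *: Q.
set E' := Fi - c0 *: Fj - lam c0 ^+ 2 * Q1.
have hE' : forall m, abs E'@_m < 1.
  move=> m; have -> : E' = u^-1 *: (u *: (Fi - c0 *: Fj) - (u *: lam c0) ^+ 2 * Q).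
    rewrite /E' /Q1 exprZn -scalerAl scalerBr scalerA mulVf // scale1r.
    by rewrite scalerA expr2 mulrA mulVf // mul1r -scalerAr.
  by rewrite mcoeffZ (absM Hab) abs_unit_inv // mul1r.
have [e [he hE'e]] := small_max _ hE'.
set Q0 := pihomog mdeg (d - 2) Q1.
set E0 := pihomog mdeg d E'.
have hlam : lam c0 ^+ 2 \is 2.-homog.
  by have := dhomogMn 2 (lam_homog i j c0); rewrite mul1n.
have hdec : Fi - c0 *: Fj = lam c0 ^+ 2 * Q0 + E0.
  rewrite /E0 /E' raddfB /= pihomog_dE ?rpredB ?rpredZ //.
  by rewrite -(subnKC hd) pihomogHM // -/Q0 addrCA subrr addr0.
have cQ1 : cb 1 Q1 by apply: (cbZ1 Hab) => //; rewrite hu.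
have := core_result Hab i j hij d Fi Fj hd hFi hFj cFi cFj GR c0 hc0 Q0 E0 e
  (cb_pihomog _ _ _ cQ1) (pihomogP _ _ _) he (cb_pihomog _ _ _ hE'e) hdec s Hs hdir C hCj hCl.
by [].
Qed.

End Chart.


Theorem lemma3p8 (R : realType) (L : closedFieldType) (abs : L -> R) :
  nonarch_abs abs -> abs_complete abs -> [pchar L] =i pred0 ->
  forall (d : nat) (F1 F2 : {mpoly L[2]}),
    (2 <= d)%N -> rat_map_lift d F1 F2 ->
    normalized_lift abs F1 F2 -> good_reduction abs F1 F2 ->
  forall a b : L, direction_lift abs a b -> fixed_critical_red abs F1 F2 a b ->
  forall s : {mpoly L[2]} -> R,
    berk_point abs s -> in_direction a b s -> berk_fixed F1 F2 s ->
    type1_point abs s.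
Proof.
move=> Hab _ _ d F1 F2 hd [hF1 hF2 _] [cF1 cF2 _] hgood a b [ha [hb hab]]
  [Q [hQ hred]] s [Hs _] hdir [C [C0 hfix]].
pose i0 : 'I_2 := @Ordinal 2 0 isT.
pose i1 : 'I_2 := @Ordinal 2 1 isT.
have h01 : i0 != i1 by [].
have h10 : i1 != i0 by [].
have eX : varX L = 'X_i0 by [].
have eY : varY L = 'X_i1 by [].
have ev0 : forall G : {mpoly L[2]}, G \mPo [tuple F1; F2] = G \mPo [tuple F1; F2] by [].
have cX : forall k c, ('X_k - c *: 'X_(if k == i0 then i1 else i0) : {mpoly L[2]}) \mPo [tuple F1; F2]
   = [tuple F1; F2]`_k - c *: [tuple F1; F2]`_(if k == i0 then i1 else i0).
  by move=> k c; rewrite comp_mpolyB comp_mpolyZ !comp_mpolyXU.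
have fix1 : forall G : {mpoly L[2]}, G \is 1.-homog -> s (G \mPo [tuple F1; F2]) = C * s G.
  by move=> G hG; have := hfix 1%N G hG; rewrite expr1.
have homX : forall k, ('X_k : {mpoly L[2]}) \is 1.-homog by move=> k; rewrite dhomogX /= mdeg1.
have hom1 : forall k c, ('X_k - c *: 'X_(if k == i0 then i1 else i0) : {mpoly L[2]}) \is 1.-homog.
  by move=> k c; rewrite rpredB ?rpredZ ?homX.
have [hb1|hb1] := eqVneq (abs b) 1.
-
  have b0 : b != 0 by apply/eqP => h; move: hb1; rewrite h (abs0 Hab) => /eqP; rewrite eq_sym oner_eq0.
  set c0 := a / b.
  have hc0 : abs c0 <= 1 by rewrite /c0 (absM Hab) (abs_unit_inv Hab) // mulr1.
  have eL : b *: varX L - a *: varY L = b *: ('X_i0 - c0 *: 'X_i1).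
    by rewrite eX eY scalerBr scalerA /c0 mulrC divfK.
  have eF : b *: F1 - a *: F2 = b *: (F1 - c0 *: F2).
    by rewrite scalerBr scalerA /c0 mulrC divfK.
  have hdir' : s ('X_i0 - c0 *: 'X_i1) < Num.max (s 'X_i0) (s 'X_i1).
    by move: hdir; rewrite /in_direction eL (sZ Hs) hb1 mul1r.
  have hCj : s F2 = C * s 'X_i1.
    by have := fix1 _ (homX i1); rewrite comp_mpolyXU.
  have hCl : forall c, s (F1 - c *: F2) = C * s ('X_i0 - c *: 'X_i1).
    by move=> c; have := fix1 _ (hom1 i0 c); rewrite cX.
  have hred' : forall m, abs (b *: (F1 - c0 *: F2) - (b *: ('X_i0 - c0 *: 'X_i1)) ^+ 2 * Q)@_m < 1.
    by move=> m; rewrite -eF -eL; apply: hred.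
  have [Sp [c hc]] := chart_result Hab i0 i1 h01 d F1 F2 hd hF1 hF2 cF1 cF2 hgood c0 b hc0 hb1
    Q hQ hred' s Hs hdir' C hCj hCl.
  exists c, 1; split; first by right; exact: oner_neq0.
  exists (s 'X_i1); split => // n G hG; rewrite (hc n G hG) /eval_seminorm; congr (_ * abs _).
-
  have ha1 : abs a = 1.
    have : 1 <= Num.max (abs a) (abs b) by rewrite hab.
    rewrite le_max => /orP[h|h].
      by apply/eqP; rewrite eq_le ha h.
    by move: hb1; rewrite (_ : abs b = 1) ?eqxx //; apply/eqP; rewrite eq_le hb h.
  have a0 : a != 0 by apply/eqP => h; move: ha1; rewrite h (abs0 Hab) => /eqP; rewrite eq_sym oner_eq0.
  set c0 := b / a.
  have hc0 : abs c0 <= 1 by rewrite /c0 (absM Hab) (abs_unit_inv Hab) // mulr1.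
  have hba : b = a * c0 by rewrite /c0 mulrC divfK.
  have hu : abs (- a) = 1 by rewrite (absN Hab).
  have eL : b *: varX L - a *: varY L = (- a) *: ('X_i1 - c0 *: 'X_i0).
    by rewrite eX eY {1}hba -!mul_mpolyC !rmorphM !rmorphN /=; ring.
  have eF : b *: F1 - a *: F2 = (- a) *: (F2 - c0 *: F1).
    by rewrite {1}hba -!mul_mpolyC !rmorphM !rmorphN /=; ring.
  have hdir' : s ('X_i1 - c0 *: 'X_i0) < Num.max (s 'X_i1) (s 'X_i0).
    by move: hdir; rewrite /in_direction eL (sZ Hs) hu mul1r maxC.
  have hCj : s F1 = C * s 'X_i0.
    by have := fix1 _ (homX i0); rewrite comp_mpolyXU.
  have hCl : forall c, s (F2 - c *: F1) = C * s ('X_i1 - c *: 'X_i0).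
    by move=> c; have := fix1 _ (hom1 i1 c); rewrite cX.
  have hred' : forall m, abs ((- a) *: (F2 - c0 *: F1) - ((- a) *: ('X_i1 - c0 *: 'X_i0)) ^+ 2 * Q)@_m < 1.
    by move=> m; rewrite -eF -eL; apply: hred.
  have GR : forall D Qi Qj : {mpoly L[2]}, @cb R L abs 1 D -> @cb R L abs 1 Qi -> @cb R L abs 1 Qj ->
      (forall m, abs (F2 - D * Qi)@_m < 1) -> (forall m, abs (F1 - D * Qj)@_m < 1) ->
      forall m, m != 0%MM -> abs D@_m < 1.
    by move=> D Qi Qj h1 h2 h3 h4 h5; apply: (hgood D Qj Qi).
  have [Sp [c hc]] := chart_result Hab i1 i0 h10 d F2 F1 hd hF2 hF1 cF2 cF1 GR c0 (- a) hc0 hu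
    Q hQ hred' s Hs hdir' C hCj hCl.
  exists 1, c; split; first by left; exact: oner_neq0.
  exists (s 'X_i0); split => // n G hG; rewrite (hc n G hG) /eval_seminorm; congr (_ * abs _).
  by apply: meval_eq => k; rewrite /pt; case: k => [[|[|//]] hk].
Qed.
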